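(* There exist an environment $E$ and a total preorder $\succeq$ on $\Pi^E$ such that $\succeq\in\mathrm{Ord}_{\mathrm{LAR}}(E)$ but $\succeq\notin\mathrm{Ord}_{\mathrm{RRL}}(E)$.
   Context: An environment is a tuple $E=(\mathcal S,\mathcal A,\mathcal T,\mathcal I)$ where $\mathcal S,\mathcal A$ are finite nonempty sets, $\mathcal T:\mathcal S\times\mathcal A\to\Delta(\mathcal S)$ and $\mathcal I\in\Delta(\mathcal S)$. A policy is a map $\pi:\mathcal S\to\Delta(\mathcal A)$ (stationary, possibly stochastic); $\Pi^E$ denotes the set of all policies. A trajectory $\xi=(s_0,a_0,s_1,a_1,\dots)$ is generated under $\pi$ by $s_0\sim\mathcal I$, $a_t\sim\pi(s_t)$, $s_{t+1}\sim\mathcal T(s_t,a_t)$; $\mathbb E^\pi_\xi$ denotes expectation under this distribution. An objective-specification formalism $X$ assigns to each environment $E$ a set of objective specifications, each inducing a total preorder $\succeq$ on $\Pi^E$; $\mathrm{Ord}_X(E)$ is the set of total preorders so induced. A specification defining a scalar $J:\Pi^E\to\mathbb R$ induces $\pi_1\succeq\pi_2\iff J(\pi_1)\ge J(\pi_2)$. LAR: specification $(\mathcal R)$, $\mathcal R:\mathcal S\times\mathcal A\times\mathcal S\to\mathbb R$, $J(\pi)=\lim_{N\to\infty}\frac1N\mathbb E^\pi_\xi[\sum_{t=0}^{N-1}\mathcal R(s_t,a_t,s_{t+1})]$. RRL: specification $(\mathcal R,\alpha,F,\gamma)$ with $\mathcal R:\mathcal S\times\mathcal A\times\mathcal S\to\mathbb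 R$, $\alpha\in\mathbb R$, $F:\Delta(\mathcal A)\to\mathbb R$, $\gamma\in[0,1)$; $J(\pi)=\mathbb E^\pi_\xi[\sum_{t=0}^\infty\gamma^t(\mathcal R(s_t,a_t,s_{t+1})-\alpha F(\pi(s_t)))]$. *)

(* Defs.v *)
From HB Require Import structures.
From mathcomp Require Import all_boot all_order all_algebra.
From mathcomp Require Import all_classical all_reals all_analysis.
From mathcomp Require Import Rstruct Rstruct_topology.
Set Implicit Arguments. Unset Strict Implicit. Unset Printing Implicit Defensive.
Import Order.TTheory GRing.Theory Num.Theory numFieldNormedType.Exports.
Local Open Scope classical_set_scope.
Local Open Scope ring_scope.

Section RL.
Variable R : realType.

Definition is_dist (T : finType) (p : T -> R) : Prop :=
  (forall x, 0 <= p x) /\ \sum_(x : T) p x = 1.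

Definition distr (T : finType) := {p : T -> R | is_dist p}.

Record env := Env {
  st : finType;
  act : finType;
  st_nonempty : (0 < #|st|)%N;
  act_nonempty : (0 < #|act|)%N;
  trans : st -> act -> st -> R;          (* trans s a s' = T(s,a)(s') *)
  trans_dist : forall s a, is_dist (trans s a);
  init : st -> R;
  init_dist : is_dist init }.

Definition policy (E : env) := {p : st E -> act E -> R | forall s, is_dist (p s)}.

Definition pol_dist (E : env) (pi : policy E) (s : st E) : distr (act E) :=
  exist _ (proj1_sig pi s) (proj2_sig pi s).

Fixpoint state_marg (E : env) (pi : policy E) (t : nat) : st E -> R :=
  match t with
  | O => @init E
  | t'.+1 => fun s' => \sum_(s : st E) \sum_(a : act E)
              state_marg pi t' s * proj1_sig pi s a * trans s a s'
  end.

Definition exp_reward (E : env) (Rw : st E -> act E -> st E -> R)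
  (pi : policy E) (t : nat) : R :=
  \sum_(s : st E) \sum_(a : act E) \sum_(s' : st E)
    state_marg pi t s * proj1_sig pi s a * trans s a s' * Rw s a s'.

Definition exp_reg (E : env) (F : distr (act E) -> R) (pi : policy E) (t : nat) : R :=
  \sum_(s : st E) state_marg pi t s * F (pol_dist pi s).

Definition J_LAR (E : env) (Rw : st E -> act E -> st E -> R) (pi : policy E) : R :=
  limn ((fun N : nat => N%:R^-1 * \sum_(t < N) exp_reward Rw pi t) : R^nat).

Definition J_RRL (E : env) (Rw : st E -> act E -> st E -> R) (alpha : R)
  (F : distr (act E) -> R) (gamma : R) (pi : policy E) : R :=
  limn ((fun N : nat => \sum_(t < N)
          gamma ^+ t * (exp_reward Rw pi t - alpha * exp_reg F pi t)) : R^nat).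

Definition total_preorder (T : Type) (r : T -> T -> Prop) : Prop :=
  (forall x, r x x) /\ (forall x y z, r x y -> r y z -> r x z) /\
  (forall x y, r x y \/ r y x).

Definition induced_by (T : Type) (J : T -> R) (ord : T -> T -> Prop) : Prop :=
  forall p q, ord p q <-> J p >= J q.

Definition in_Ord_LAR (E : env) (ord : policy E -> policy E -> Prop) : Prop :=
  exists Rw : st E -> act E -> st E -> R, induced_by (J_LAR Rw) ord.

Definition in_Ord_RRL (E : env) (ord : policy E -> policy E -> Prop) : Prop :=
  exists (Rw : st E -> act E -> st E -> R) (alpha : R) (F : distr (act E) -> R) (gamma : R),
    0 <= gamma < 1 /\ induced_by (J_RRL Rw alpha F gamma) ord.

End RL.

(* Main.v *)
Require Import Defs.
From HB Require Import structures.
From mathcomp Require Import all_boot all_order all_algebra.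
From mathcomp Require Import all_classical all_reals all_analysis.
From mathcomp Require Import Rstruct Rstruct_topology.
From mathcomp Require Import ring lra.
Set Implicit Arguments. Unset Strict Implicit. Unset Printing Implicit Defensive.
Import Order.TTheory GRing.Theory Num.Theory numFieldNormedType.Exports.
Local Open Scope classical_set_scope.
Local Open Scope ring_scope.

Notation RR := Rdefinitions.R.

Lemma sum_delta (T : finType) (x : T) (f : T -> RR) :
  \sum_(s : T) (s == x)%:R * f s = f x.
Proof.
rewrite (bigD1 x) //= eqxx mul1r big1 ?addr0 // => s /negbTE ->; by rewrite mul0r.
Qed.

Lemma delta_dist (T : finType) (x : T) : is_dist (fun s : T => (s == x)%:R : RR).
Proof.
rewrite /is_dist; split; first by move=> s; rewrite ler0n.
rewrite -[RHS](sum_delta x (fun _ => 1)); by apply: eq_bigr => s _; rewrite mulr1.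
Qed.

Definition s0 : 'I_3 := ord0.
Definition s1 : 'I_3 := Ordinal (isT : (1 < 3)%N).
Definition s2 : 'I_3 := Ordinal (isT : (2 < 3)%N).

Definition nxt (s : 'I_3) (a : bool) : 'I_3 :=
  if s == s0 then (if a then s1 else s2) else s1.

Lemma card3 : (0 < #|'I_3|)%N. Proof. by rewrite card_ord. Qed.
Lemma cardb : (0 < #|{: bool}|)%N. Proof. by rewrite card_bool. Qed.

Definition E0 : env RR :=
  @Env RR (ordinal 3) bool card3 cardb
    (fun s a s' => (s' == nxt s a)%:R) (fun s a => delta_dist (nxt s a))
    (fun s => (s == s0)%:R) (delta_dist s0).

Definition pol (c : 'I_3 -> bool) : policy E0 :=
  exist (fun p : 'I_3 -> bool -> RR => forall s, is_dist (p s))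
    (fun s a => (a == c s)%:R) (fun s => delta_dist (c s)).

Fixpoint traj (c : 'I_3 -> bool) (t : nat) : 'I_3 :=
  match t with O => s0 | t'.+1 => nxt (traj c t') (c (traj c t')) end.

Lemma margE c t s : state_marg (pol c) t s = (s == traj c t)%:R.
Proof.
elim: t s => [|t IH] s //=.
under eq_bigr => x _ do under eq_bigr => a _ do rewrite IH -!mulrA.
rewrite (eq_bigr (fun x => (x == traj c t)%:R *
   \sum_(a : bool) ((a == c x)%:R * (s == nxt x a)%:R))); last first.
  by move=> x _; rewrite mulr_sumr.
rewrite sum_delta sum_delta //.
Qed.

Lemma rewardE c Rw t :
  exp_reward Rw (pol c) t = Rw (traj c t) (c (traj c t)) (nxt (traj c t) (c (traj c t))).
Proof.
rewrite /exp_reward.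
under eq_bigr => x _ do under eq_bigr => a _ do under eq_bigr => y _ do
  rewrite margE -!mulrA.
rewrite (eq_bigr (fun x => (x == traj c t)%:R * \sum_(a : bool) ((a == c x)%:R *
   \sum_(y : 'I_3) ((y == nxt x a)%:R * Rw x a y)))); last first.
  move=> x _; rewrite mulr_sumr; apply: eq_bigr => a _; rewrite !mulr_sumr; apply: eq_bigr => y _ /=; by rewrite !mulrA.
by rewrite !sum_delta.
Qed.

Lemma regE c F t : exp_reg F (pol c) t = F (pol_dist (pol c) (traj c t)).
Proof.
by rewrite /exp_reg; under eq_bigr => x _ do rewrite margE; rewrite sum_delta.
Qed.

Lemma traj2 c t : traj c t.+2 = s1.
Proof. elim: t => [|t IH]; first by rewrite /= /nxt; case: (c s0). by change (nxt (traj c t.+2) (c (traj c t.+2)) = s1); rewrite IH. Qed.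

Lemma sum_key (g : RR) (w : nat -> RR) : (forall t, w t.+2 = w 2%N) -> forall N,
  \sum_(t < N.+2) g ^+ t * w t =
    (w 0%N - w 2%N) + g * (w 1%N - w 2%N) + w 2%N * \sum_(t < N.+2) g ^+ t.
Proof.
move=> hw; elim=> [|N IH].
  rewrite !big_ord_recr !big_ord0 /= expr0 expr1; ring.
rewrite big_ord_recr [in RHS]big_ord_recr /= IH hw; ring.
Qed.

Lemma cvg_affine (c W b : RR) (u : nat -> RR) : u @ \oo --> b -> (fun n => c + W * u n) @ \oo --> c + W * b.
Proof. move=> hu.
have h2 := (@cvgMl_tmp RR nat \oo (@filter_filter _ _ eventually_filter) u W b hu).
have h1 := (@cvg_cst RR^o c nat \oo (@filter_filter _ _ eventually_filter)).
have := (@cvgD RR RR^o nat \oo (@filter_filter _ _ eventually_filter) _ _ _ _ h1 h2).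
exact.
Qed.

Lemma geo_lim (g : RR) (w : nat -> RR) : 0 <= g < 1 -> (forall t, w t.+2 = w 2%N) ->
  limn ((fun N : nat => \sum_(t < N) g ^+ t * w t) : RR^nat) =
    (w 0%N - w 2%N) + g * (w 1%N - w 2%N) + w 2%N / (1 - g).
Proof.
move=> /andP[g0 g1] hw; apply: cvg_lim; first exact: Rhausdorff.
have hg : series (geometric 1 g) @ \oo --> (1 * (1 - g)^-1 : RR).
  by apply: cvg_geometric_series; rewrite ger0_norm.
rewrite -(cvg_shiftn 2) mul1r in hg.
pose u (n : nat) : RR := series (geometric 1 g) (n + 2)%N.
have hu : u @ \oo --> (1 - g)^-1 by exact: hg.
rewrite -(cvg_shiftn 2).
have -> : [sequence \sum_(t < (n + 2)%N) g ^+ t * w t]_n =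
  (fun n => (w 0%N - w 2%N) + g * (w 1%N - w 2%N) + w 2%N * u n).
  apply: funext => n /=; rewrite /u addn2 sum_key // seriesEnat /= big_mkord.
  by congr (_ + _ * _); apply: eq_bigr => t _; rewrite /geometric mul1r.
exact: cvg_affine.
Qed.

Lemma sum_key1 (w : nat -> RR) : (forall t, w t.+2 = w 2%N) -> forall N,
  \sum_(t < N.+2) w t = (w 0%N - w 2%N) + (w 1%N - w 2%N) + w 2%N * (N.+2)%:R.
Proof.
move=> hw; elim=> [|N IH].
  rewrite !big_ord_recr !big_ord0 /=; ring.
rewrite big_ord_recr /= IH hw -[(N.+3)%:R]natr1 -[(N.+2)%:R]natr1; ring.
Qed.

Lemma ces_lim (w : nat -> RR) : (forall t, w t.+2 = w 2%N) ->
  limn ((fun N : nat => N%:R^-1 * \sum_(t < N) w t) : RR^nat) = w 2%N.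
Proof.
move=> hw; apply: cvg_lim; first exact: Rhausdorff.
have hh := @cvg_harmonic RR.
rewrite -(cvg_shiftn 1) in hh.
pose u (n : nat) : RR := (n + 2)%:R^-1.
have hu : u @ \oo --> (0:RR).
  suff -> : u = [sequence harmonic (n + 1)%N]_n by [].
  by apply: funext => n /=; rewrite /u addn1 addn2.
rewrite -(cvg_shiftn 2).
have -> : [sequence (n + 2)%:R^-1 * \sum_(t < (n + 2)%N) w t]_n =
  (fun n => w 2%N + ((w 0%N - w 2%N) + (w 1%N - w 2%N)) * u n).
  apply: funext => n /=; rewrite /u addn2 sum_key1 //.
  have hn : ((n.+2)%:R : RR) != 0 by rewrite pnatr_eq0.
  by field.
have := cvg_affine (c:=w 2%N) (W:=(w 0%N - w 2%N) + (w 1%N - w 2%N)) hu.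
by rewrite mulr0 addr0.
Qed.

Lemma distr_eq (T : finType) (p q : distr RR T) : proj1_sig p = proj1_sig q -> p = q.
Proof.
case: p q => [p hp] [q hq] /= e; subst q; congr exist; exact: Prop_irrelevance.
Qed.

Definition G Rw (alpha : RR) (F : distr RR bool -> RR) (c : 'I_3 -> bool) (s : 'I_3) : RR :=
  Rw s (c s) (nxt s (c s)) - alpha * F (@pol_dist RR E0 (pol c) s).

Lemma Geq Rw alpha F c c' s : c s = c' s -> G Rw alpha F c s = G Rw alpha F c' s.
Proof.
move=> e; rewrite /G e; congr (_ - _ * F _).
by apply: distr_eq => /=; apply: funext => a; rewrite e.
Qed.

Lemma RRL_val Rw alpha F (gam : RR) c : 0 <= gam < 1 ->
  J_RRL Rw alpha F gam (pol c) =
   (G Rw alpha F c s0 - G Rw alpha F c s1) + gam * (G Rw alpha F c (traj c 1) - G Rw alpha F c s1)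
   + G Rw alpha F c s1 / (1 - gam).
Proof.
move=> hg; rewrite /J_RRL (@geo_lim gam (fun t => exp_reward Rw (pol c) t - alpha * exp_reg F (pol c) t)) //.
  by rewrite !rewardE !regE traj2.
by move=> t; rewrite !rewardE !regE !traj2.
Qed.

Definition Rw0 (s : 'I_3) (a : bool) (s' : 'I_3) : RR := ((s == s1) && a)%:R.

Definition cp (b v : bool) (s : 'I_3) : bool := if s == s1 then v else b.

Lemma LAR_val (b v : bool) : @J_LAR RR E0 Rw0 (pol (cp b v)) = v%:R.
Proof.
rewrite /J_LAR (@ces_lim (fun t => @exp_reward RR E0 Rw0 (pol (cp b v)) t)); first by rewrite rewardE traj2.
by move=> t; rewrite !rewardE !traj2.
Qed.

Theorem mainTheorem19 :
  exists (E : env Rdefinitions.R) (ord : policy E -> policy E -> Prop),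
    total_preorder ord /\ in_Ord_LAR ord /\ ~ in_Ord_RRL ord.
Proof.
exists E0, (fun p q => @J_LAR RR E0 Rw0 q <= @J_LAR RR E0 Rw0 p).
split; [|split].
- split; first by move=> x.
  split; first by move=> x y z h1 h2; exact: le_trans h2 h1.
  by move=> x y; case/orP: (le_total (@J_LAR RR E0 Rw0 x) (@J_LAR RR E0 Rw0 y)) => h; [right|left].
- by exists Rw0.
- move=> [Rw [alpha [F [gam [hg hind]]]]].
  set J := J_RRL Rw alpha F gam.
  have tie : forall v, J (pol (cp true v)) = J (pol (cp false v)).
    move=> v; apply/eqP; rewrite eq_le; apply/andP; split.
      by apply/(hind _ _); rewrite !LAR_val.
    by apply/(hind _ _); rewrite !LAR_val.
  have strict : J (pol (cp true false)) < J (pol (cp true true)).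
    rewrite ltNge; apply/negP => /(hind _ _); rewrite !LAR_val /=.
    by rewrite ler10.
  have h1 := tie true; have h2 := tie false.
  move: h1 h2 strict; rewrite /J !RRL_val //.
  have e1 : forall b v, traj (cp b v) 1 = if b then s1 else s2 by move=> [] [].
  rewrite !e1.
  have A : G Rw alpha F (cp true true) s0 = G Rw alpha F (cp true false) s0 by exact: Geq.
  have B : G Rw alpha F (cp false true) s0 = G Rw alpha F (cp false false) s0 by exact: Geq.
  have C : G Rw alpha F (cp false true) s2 = G Rw alpha F (cp false false) s2 by exact: Geq.
  have Wt : G Rw alpha F (cp false true) s1 = G Rw alpha F (cp true true) s1 by exact: Geq.
  have Wf : G Rw alpha F (cp false false) s1 = G Rw alpha F (cp true false) s1 by exact: Geq.
  rewrite B C Wt Wf A.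
  move: (G _ _ _ (cp true false) s0) (G _ _ _ (cp false false) s0) (G _ _ _ (cp false false) s2)
    (G _ _ _ (cp true true) s1) (G _ _ _ (cp true false) s1) => a b c wt wf.
  move: hg => /andP[g0 g1].
  have n1 : 1 - gam != 0 by rewrite subr_eq0 gt_eqF.
  have k : forall x, x / (1 - gam) = x + (gam * x) / (1 - gam) by move=> x; field.
  move=> h1 h2 h3.
  have e : gam * wt = gam * wf.
    have : gam * (wt - wt) = 0 by rewrite subrr mulr0.
    have : gam * (wf - wf) = 0 by rewrite subrr mulr0.
    move: h1 h2; rewrite !mulrBr; lra.
  have kt := k wt; have kf := k wf.
  move: h3; rewrite kt kf e !subrr !mulr0; lra.
Qed.
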